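(* The map $D:\mathbb{Q}^{\mathscr{P}}\to\mathbb{Q}^{\mathscr{P}}$, $Df=S_2f-S_2\odot f$, is linear, satisfies the Leibniz rule $D(f\odot g)=(Df)\odot g+f\odot(Dg)$, and satisfies $D\langle f\rangle_q=\langle Df\rangle_q$ for all $f\in\mathbb{Q}^{\mathscr{P}}$, where on the left $D=q\frac{d}{dq}$.
   Context: $\mathscr{P}$ is the set of partitions $\lambda=(\lambda_1\ge\lambda_2\ge\dots)$, $|\lambda|=\sum\lambda_i$; $\mathbb{Q}^{\mathscr{P}}$ the functions $\mathscr{P}\to\mathbb{Q}$. $\langle f\rangle_q=\frac{\sum_\lambda f(\lambda)q^{|\lambda|}}{\sum_\lambda q^{|\lambda|}}$. $S_2(\lambda)=-\frac1{24}+\sum_i\lambda_i$ and $S_2f$ is the pointwise product. Induced product: with $u_\lambda=\prod_{i:\lambda_i>0}u_{\lambda_i}$ and $\langle f\rangle_{\vec u}=\frac{\sum_\lambda f(\lambda)u_\lambda}{\sum_\lambda u_\lambda}\in\mathbb{Q}[[u_1,u_2,\dots]]$ (a linear bijection in $f$), $f\odot g$ is defined by $\langle f\odot g\rangle_{\vec u}=\langle f\rangle_{\vec u}\langle g\rangle_{\vec u}$. *)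

(* Defs.v *)
From HB Require Import structures.
From mathcomp Require Import all_boot all_order all_algebra.
Set Implicit Arguments. Unset Strict Implicit. Unset Printing Implicit Defensive.
Import Order.TTheory GRing.Theory Num.Theory.
Local Open Scope ring_scope.

Definition is_part (s : seq nat) : bool := sorted geq s && all (fun x => 0 < x)%N s.

Record ptn := Ptn { pval :> seq nat ; pvalP : is_part pval }.
HB.instance Definition _ := [isSub for pval].
HB.instance Definition _ := [Equality of ptn by <:].

Definition psize (l : ptn) : nat := sumn l.

Fixpoint allseqs (k n : nat) : seq (seq nat) :=
  match k with
  | 0 => [:: [::]]
  | k'.+1 => flatten [seq [seq x :: s | s <- allseqs k' n] | x <- iota 1 n]
  end.

Definition parts_of (n : nat) : seq ptn :=
  pmap (insub : seq nat -> option ptn)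
    [seq s <- flatten [seq allseqs k n | k <- iota 0 n.+1] | sumn s == n].

(** Q[[u_1,u_2,...]]: the monomial u_lambda = prod_i u_{lambda_i} is indexed by
    the ptn lambda, so a formal power series is its coefficient function
    ptn -> rat.  Product (u_a * u_b = u_{a ⊎ b}): *)
Definition umul (A B : ptn -> rat) (l : ptn) : rat :=
  \sum_(k < (psize l).+1) \sum_(a <- parts_of k) \sum_(b <- parts_of (psize l - k))
     (if perm_eq (pval a ++ pval b) (pval l) then A a * B b else 0).

(** sum_lambda u_lambda = prod_i 1/(1-u_i) and its inverse prod_i (1 - u_i) *)
Definition uZ : ptn -> rat := fun _ => 1.
Definition uZinv (l : ptn) : rat :=
  if uniq (pval l) then (-1) ^+ size (pval l) else 0.

(** <f>_u = (sum_lambda f(lambda) u_lambda) / (sum_lambda u_lambda) *)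
Definition ubracket (f : ptn -> rat) : ptn -> rat := umul f uZinv.

(** induced product: <f ⊙ g>_u = <f>_u <g>_u, i.e. f ⊙ g = (<f>_u <g>_u) * Z *)
Definition odot (f g : ptn -> rat) : ptn -> rat :=
  umul (umul (ubracket f) (ubracket g)) uZ.

Definition S2 (l : ptn) : rat := - (24%:R)^-1 + (psize l)%:R.

Definition Dop (f : ptn -> rat) : ptn -> rat :=
  fun l => S2 l * f l - odot S2 f l.

(** Formal power series in one variable q: coefficient functions nat -> rat. *)
Definition qmul (a b : nat -> rat) (n : nat) : rat :=
  \sum_(i < n.+1) a i * b (n - i)%N.

(** first n+1 coefficients of the inverse series 1/a (a 0 <> 0) *)
Fixpoint qinv_seq (a : nat -> rat) (n : nat) : seq rat :=
  match n with
  | 0 => [:: (a 0%N)^-1]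
  | n'.+1 => let s := qinv_seq a n' in
      rcons s (- (a 0%N)^-1 * \sum_(1 <= k < n.+1) a k * nth 0 s (n - k)%N)
  end.
Definition qinv (a : nat -> rat) (n : nat) : rat := nth 0 (qinv_seq a n) n.
Definition qdiv (a b : nat -> rat) : nat -> rat := qmul a (qinv b).

Definition qsum (f : ptn -> rat) (n : nat) : rat := \sum_(l <- parts_of n) f l.

Definition qbracket (f : ptn -> rat) : nat -> rat :=
  qdiv (qsum f) (qsum (fun _ => 1)).

Definition qD (a : nat -> rat) : nat -> rat := fun n => n%:R * a n.

(* Main.v *)
Require Import Defs.
From HB Require Import structures.
From mathcomp Require Import all_boot all_order all_algebra.
From mathcomp Require Import zify ring.
From mathcomp.classical Require Import boolp.
Set Implicit Arguments. Unset Strict Implicit. Unset Printing Implicit Defensive.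
Import Order.TTheory GRing.Theory Num.Theory.
Local Open Scope ring_scope.

Lemma mem_allseqs k n s :
  (s \in allseqs k n) = (size s == k) && all (fun x => (0 < x <= n)%N) s.
Proof.
elim: k s => [|k IH] [|x t] //=.
- apply/flatten_mapP => -[y _ /mapP [u _]] //.
- apply/flatten_mapP/idP.
  + move=> [y]; rewrite mem_iota => /andP[y1 yn] /mapP [u uin [-> ->]].
    move: uin; rewrite IH => /andP[/eqP -> ->]; rewrite eqxx /=.
    by rewrite y1 /=; move: yn; rewrite add1n ltnS => ->.
  + move=> /andP [sz /andP [xb tall]]; exists x.
      by rewrite mem_iota add1n ltnS.
    by apply/mapP; exists t => //; rewrite IH -(eqn_add2r 1) !addn1 sz.
Qed.

Lemma uniq_allseqs k n : uniq (allseqs k n).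
Proof.
elim: k => [|k IH] //=.
apply: allpairs_uniq => //; first exact: iota_uniq.
by move=> [a b] [c d] _ _ /= [-> ->].
Qed.

Lemma part_pos (l : ptn) : all (fun x => 0 < x)%N l.
Proof. by case: l => s /= /andP[]. Qed.

Lemma part_sorted (l : ptn) : sorted geq l.
Proof. by case: l => s /= /andP[]. Qed.

Lemma size_le_sumn (s : seq nat) : all (fun x => 0 < x)%N s -> (size s <= sumn s)%N.
Proof. elim: s => //= x s IH /andP[x0 /IH]; lia. Qed.

Lemma all_le_sumn (s : seq nat) : all (fun x => x <= sumn s)%N s.
Proof.
elim: s => //= x s IH; rewrite leq_addr /=.
apply: sub_all IH => y /= H; lia.
Qed.

Definition psz (s : seq nat) := s.

Lemma mem_parts_of k (l : ptn) : (l \in parts_of k) = (psize l == k).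
Proof.
rewrite /parts_of mem_pmap_sub mem_filter /psize.
case: eqP => // <-.
apply/flatten_mapP; exists (size l).
  by rewrite mem_iota add0n ltnS size_le_sumn // part_pos.
rewrite mem_allseqs eqxx /=.
have := all_le_sumn l; have := part_pos l.
elim: (pval l) (sumn l) => //= x t IH M /andP[-> /IH {}IH] /andP[-> /IH] //.
Qed.

Lemma uniq_parts_of k : uniq (parts_of k).
Proof.
rewrite /parts_of; apply: pmap_sub_uniq; apply: filter_uniq.
have -> : flatten [seq allseqs j k | j <- iota 0 k.+1] =
   [seq s | j <- iota 0 k.+1, s <- allseqs j k].
  by rewrite /allpairs_dep; congr flatten; apply: eq_map => j; rewrite map_id.
apply: allpairs_uniq_dep; first exact: iota_uniq.
  by move=> j _; apply: uniq_allseqs.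
move=> [j s] [j' s'] /allpairsPdep [a [b [_ bin ->]]] /allpairsPdep [a' [b' [_ bin' ->]]] /= Heq.
move: bin bin'; rewrite !mem_allseqs => /andP[/eqP Hb _] /andP[/eqP Hb' _].
by subst.
Qed.

Definition allp (N : nat) : seq ptn := flatten [seq parts_of k | k <- iota 0 N.+1].

Lemma mem_allp N (l : ptn) : (l \in allp N) = (psize l <= N)%N.
Proof.
apply/flatten_mapP/idP.
  by move=> [k]; rewrite mem_iota mem_parts_of => /andP[_ kN] /eqP ->; rewrite -ltnS.
move=> H; exists (psize l); first by rewrite mem_iota.
by rewrite mem_parts_of.
Qed.

Lemma uniq_allp N : uniq (allp N).
Proof.
rewrite /allp.
have -> : flatten [seq parts_of k | k <- iota 0 N.+1] =
   [seq s | j <- iota 0 N.+1, s <- parts_of j].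
  by rewrite /allpairs_dep; congr flatten; apply: eq_map => j; rewrite map_id.
apply: allpairs_uniq_dep; first exact: iota_uniq.
  by move=> j _; apply: uniq_parts_of.
move=> [j s] [j' s'] /allpairsPdep [a [b [_ bin ->]]] /allpairsPdep [a' [b' [_ bin' ->]]] /= Heq.
move: bin bin'; rewrite !mem_parts_of => /eqP Hb /eqP Hb'.
by subst.
Qed.

Lemma geq_total : total (fun m n : nat => n <= m)%N.
Proof. by move=> m n; rewrite orbC leq_total. Qed.

Lemma sortp_proof (s : seq nat) : is_part (sort geq [seq x <- s | (0 < x)%N]).
Proof.
rewrite /is_part (sort_sorted geq_total) /= all_sort.
by apply/allP => x; rewrite mem_filter => /andP[].
Qed.

Definition sortp (s : seq nat) : ptn := Ptn (sortp_proof s).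

Lemma sortpE (s : seq nat) : all (fun x => 0 < x)%N s -> perm_eq (sortp s) s.
Proof.
move=> H; rewrite /= perm_sort.
by rewrite (eq_in_filter (a2 := predT)) ?filter_predT //; apply/allP.
Qed.

Lemma ptn_perm_eq (p q : ptn) : perm_eq p q -> p = q.
Proof.
move=> H; apply: val_inj; apply: (sorted_eq (leT := geq)) => //.
- by move=> a b c /= H1 H2; apply: leq_trans H2 H1.
- by move=> a b /= /andP[H1 H2]; apply/eqP; rewrite eqn_leq H1 H2.
- exact: part_sorted.
- exact: part_sorted.
Qed.

Lemma delta_sum (L : seq ptn) (s : seq nat) (G : ptn -> rat) :
  uniq L -> all (fun x => 0 < x)%N s ->
  \sum_(d <- L) (if perm_eq s d then G d else 0) =
  if sortp s \in L then G (sortp s) else 0.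
Proof.
move=> uL pos; have sp := sortpE pos.
have key : forall d : ptn, perm_eq s d = (d == sortp s).
  move=> d; apply/idP/eqP => [H|->]; last by rewrite perm_sym.
  by apply: ptn_perm_eq; apply: (perm_trans (_ : perm_eq d s)); rewrite perm_sym // perm_sym.
case: ifP => [pin|pnin].
  rewrite (bigD1_seq (sortp s)) // (key (sortp s)) eqxx big1 /=; first by rewrite addr0.
  move=> d.
  by rewrite key => /negbTE ->.
rewrite big1_seq // => d /andP[_ dL]; rewrite key; case: eqP => // E.
by rewrite -E dL in pnin.
Qed.

Lemma psize_sortp (s : seq nat) : all (fun x => 0 < x)%N s -> psize (sortp s) = sumn s.
Proof. by move=> H; rewrite /psize (perm_sumn (sortpE H)). Qed.

Lemma sum_parts_allp k N (F : ptn -> rat) : (k <= N)%N ->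
  \sum_(b <- parts_of k) F b = \sum_(b <- allp N) (if psize b == k then F b else 0).
Proof.
move=> kN; rewrite -big_mkcond -big_filter; apply: perm_big.
apply: uniq_perm; [exact: uniq_parts_of | by apply: filter_uniq; apply: uniq_allp|].
move=> b; rewrite mem_filter mem_parts_of mem_allp andbC.
by case: eqP => [->|]; rewrite ?kN ?andbF ?andbT ?andFb //=.
Qed.

Lemma allp_widen N M (F : ptn -> rat) : (N <= M)%N ->
  (forall a : ptn, (N < psize a)%N -> F a = 0) ->
  \sum_(a <- allp M) F a = \sum_(a <- allp N) F a.
Proof.
move=> NM H.
rewrite (eq_bigr (fun a => if (psize a <= N)%N then F a else 0)); last first.
  by move=> a _; case: leqP => // /H ->.
rewrite -big_mkcond -big_filter; apply: perm_big.
apply: uniq_perm; [by apply: filter_uniq; apply: uniq_allp | exact: uniq_allp|].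
move=> b; rewrite mem_filter !mem_allp andbC.
by case: leqP => //= bN; lia.
Qed.

Lemma sum_ord_parts M (H : nat -> ptn -> rat) :
  \sum_(k < M.+1) \sum_(a <- parts_of k) H k a =
  \sum_(a <- allp M) H (psize a) a.
Proof.
rewrite -(big_mkord xpredT (fun k => \sum_(a <- parts_of k) H k a)).
rewrite /index_iota subn0 /allp big_flatten big_map /=.
apply: eq_bigr => k _; rewrite big_seq_cond [RHS]big_seq_cond.
by apply: eq_bigr => a /andP[]; rewrite mem_parts_of => /eqP ->.
Qed.

Definition um N (A B : ptn -> rat) (l : ptn) : rat :=
  \sum_(a <- allp N) \sum_(b <- allp N)
     (if perm_eq (pval a ++ pval b) (pval l) then A a * B b else 0).

Lemma perm_psize (a b l : ptn) : perm_eq (pval a ++ pval b) (pval l) ->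
  (psize a + psize b)%N = psize l.
Proof. by move/perm_sumn; rewrite sumn_cat. Qed.

Lemma umulE N A B (l : ptn) : (psize l <= N)%N -> umul A B l = um N A B l.
Proof.
move=> lN; rewrite /umul.
rewrite (@sum_ord_parts _ (fun k a => \sum_(b <- parts_of (psize l - k)) 
     (if perm_eq (pval a ++ pval b) (pval l) then A a * B b else 0))).
rewrite /um [RHS](allp_widen (N := psize l)) //; last first.
  move=> a al; rewrite big1_seq // => b _; case: ifP => // /perm_psize E.
  by move: al; rewrite -E; lia.
apply: eq_bigr => a _; rewrite (sum_parts_allp _ (N := N)); last by lia.
apply: eq_bigr => b _; case Hp: (perm_eq _ _); last by case: ifP.
have := perm_psize Hp; case: eqP => //; lia.
Qed.

Lemma allp_sortp N (s : seq nat) : all (fun x => 0 < x)%N s ->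
  (sortp s \in allp N) = (sumn s <= N)%N.
Proof. by move=> H; rewrite mem_allp psize_sortp. Qed.

Lemma delta_Q N (s : seq nat) (Q : seq nat -> bool) (X : rat) :
  all (fun x => 0 < x)%N s ->
  (forall u v, perm_eq u v -> Q u = Q v) ->
  (Q s -> sumn s <= N)%N ->
  \sum_(d <- allp N) (if perm_eq s d then (if Q d then X else 0) else 0) =
  if Q s then X else 0.
Proof.
move=> pos Qp QN.
rewrite (@delta_sum _ _ (fun d : ptn => if Q d then X else 0)) ?uniq_allp //.
rewrite allp_sortp // (Qp _ _ (sortpE pos)).
by case: ifP => //; case: ifP => // /QN ->.
Qed.

Lemma pos_cat (a b : ptn) : all (fun x => 0 < x)%N (pval a ++ pval b).
Proof. by rewrite all_cat !part_pos. Qed.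

Lemma umulA A B C (l : ptn) :
  umul (umul A B) C l = umul A (umul B C) l.
Proof.
pose N := psize l.
have Hl : (psize l <= N)%N by [].
rewrite !(umulE _ _ Hl) /um.
transitivity (\sum_(a <- allp N) \sum_(b <- allp N) \sum_(c <- allp N)
   (if perm_eq (pval a ++ pval b ++ pval c) (pval l) then A a * B b * C c else 0)).
  transitivity (\sum_(d <- allp N) \sum_(c <- allp N) \sum_(a <- allp N) \sum_(b <- allp N)
   (if perm_eq (pval a ++ pval b) (pval d) then
      (if perm_eq (pval d ++ pval c) (pval l) then A a * B b * C c else 0) else 0)).
    rewrite big_seq [RHS]big_seq; apply: eq_bigr => d dN.
    rewrite mem_allp in dN; rewrite (umulE _ _ dN) /um.
    apply: eq_bigr => c _; case: ifP => Hdc.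
      rewrite mulr_suml; apply: eq_bigr => a _; rewrite mulr_suml; apply: eq_bigr => b _.
      by case: ifP => //; rewrite mul0r.
    by rewrite big1 // => a _; rewrite big1 // => b _; case: ifP.
  transitivity (\sum_(c <- allp N) \sum_(a <- allp N) \sum_(b <- allp N)
   (if perm_eq (pval a ++ pval b ++ pval c) (pval l) then A a * B b * C c else 0)); last first.
    rewrite exchange_big; apply: eq_bigr => a _; by rewrite exchange_big.
  rewrite exchange_big; apply: eq_bigr => c _.
  rewrite exchange_big; apply: eq_bigr => a _.
  rewrite exchange_big; apply: eq_bigr => b _.
  rewrite (delta_Q (Q := fun d => perm_eq (d ++ pval c) (pval l))) //.
  - by rewrite catA.
  - by rewrite pos_cat.
  - by move=> u v uv; rewrite (perm_catr _ uv).
  - by move/perm_sumn; rewrite !sumn_cat /N /psize; lia.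
symmetry.
transitivity (\sum_(a <- allp N) \sum_(e <- allp N) \sum_(b <- allp N) \sum_(c <- allp N)
   (if perm_eq (pval b ++ pval c) (pval e) then
      (if perm_eq (pval a ++ pval e) (pval l) then A a * B b * C c else 0) else 0)).
  rewrite big_seq [RHS]big_seq; apply: eq_bigr => a aN.
  rewrite big_seq [RHS]big_seq; apply: eq_bigr => e eN.
  rewrite mem_allp in eN; rewrite (umulE _ _ eN) /um.
  case: ifP => Hae.
    rewrite mulr_sumr; apply: eq_bigr => b _; rewrite mulr_sumr; apply: eq_bigr => c _.
    by case: ifP => //; rewrite ?mulr0 // mulrA.
  by rewrite big1 // => b _; rewrite big1 // => c _; case: ifP.
apply: eq_bigr => a _.
rewrite exchange_big; apply: eq_bigr => b _.
rewrite exchange_big; apply: eq_bigr => c _.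
rewrite (delta_Q (Q := fun e => perm_eq (pval a ++ e) (pval l))) //.
- by rewrite pos_cat.
- by move=> u v uv; rewrite (perm_catl _ uv).
- by move/perm_sumn; rewrite !sumn_cat /N /psize; lia.
Qed.

Lemma delta_F N (s : seq nat) (F : seq nat -> rat) :
  all (fun x => 0 < x)%N s ->
  (forall u v, perm_eq u v -> F u = F v) ->
  (F s != 0 -> (sumn s <= N)%N) ->
  \sum_(d <- allp N) (if perm_eq s d then F d else 0) = F s.
Proof.
move=> pos Fp FN.
rewrite (@delta_sum _ _ (fun d : ptn => F d)) ?uniq_allp //.
rewrite allp_sortp // (Fp _ _ (sortpE pos)).
case: leqP => // sN; case: (F s =P 0) => // /eqP /FN; lia.
Qed.

Lemma umulC A B (l : ptn) : umul A B l = umul B A l.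
Proof.
rewrite !(umulE _ _ (leqnn (psize l))) /um exchange_big.
apply: eq_bigr => a _; apply: eq_bigr => b _.
by rewrite (perm_catC a b) mulrC.
Qed.

Lemma umulDl A B C (l : ptn) :
  umul (fun x => A x + B x) C l = umul A C l + umul B C l.
Proof.
rewrite /umul -big_split; apply: eq_bigr => k _.
rewrite -big_split; apply: eq_bigr => a _.
rewrite -big_split; apply: eq_bigr => b _.
by case: ifP; rewrite ?addr0 // mulrDl.
Qed.

Lemma umulZl (c : rat) A C (l : ptn) :
  umul (fun x => c * A x) C l = c * umul A C l.
Proof.
rewrite /umul mulr_sumr; apply: eq_bigr => k _.
rewrite mulr_sumr; apply: eq_bigr => a _.
rewrite mulr_sumr; apply: eq_bigr => b _.
by case: ifP; rewrite ?mulr0 // mulrA.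
Qed.

Definition uone (l : ptn) : rat := if size (pval l) == 0%N then 1 else 0.

Lemma uoneE (l : ptn) : uone l = if perm_eq [::] (pval l) then 1 else 0.
Proof.
rewrite /uone perm_sym; case: (perm_nilP) => [->|] //.
by case: (pval l).
Qed.

Lemma sortp_ptn (l : ptn) : sortp l = l.
Proof. by apply: ptn_perm_eq; apply: sortpE; apply: part_pos. Qed.

Lemma umul1 A (l : ptn) : umul uone A l = A l.
Proof.
rewrite (umulE _ _ (leqnn (psize l))) /um.
rewrite (eq_bigr (fun a : ptn => if perm_eq [::] a then
    \sum_(b <- allp (psize l)) (if perm_eq (pval a ++ pval b) (pval l) then A b else 0) else 0)); last first.
  move=> a _; rewrite uoneE; case: ifP => _.
    by apply: eq_bigr => b _; rewrite mul1r.
  by rewrite big1 // => b _; rewrite mul0r; case: ifP.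
rewrite (@delta_sum _ _ (fun a : ptn =>
    \sum_(b <- allp (psize l)) (if perm_eq (pval a ++ pval b) (pval l) then A b else 0))) ?uniq_allp //.
rewrite allp_sortp //=.
rewrite (eq_bigr (fun b : ptn => if perm_eq l b then A b else 0)); last first.
  by move=> b _; rewrite perm_sym.
rewrite (@delta_sum _ _ A) ?uniq_allp ?part_pos // allp_sortp ?part_pos //.
by rewrite leqnn sortp_ptn.
Qed.

Definition uE (A : ptn -> rat) (l : ptn) : rat := (psize l)%:R * A l.

Lemma uE_mul A B (l : ptn) :
  uE (umul A B) l = umul (uE A) B l + umul A (uE B) l.
Proof.
rewrite /uE !(umulE _ _ (leqnn (psize l))) /um mulr_sumr -big_split.
apply: eq_bigr => a _; rewrite mulr_sumr -big_split; apply: eq_bigr => b _.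
case: ifP => [/perm_psize <-|_] /=; last by rewrite mulr0 addr0.
by rewrite natrD; ring.
Qed.

Definition Iseq (s : seq nat) : rat := if uniq s then (-1) ^+ size s else 0.

Lemma Iseq_perm u v : perm_eq u v -> Iseq u = Iseq v.
Proof. by move=> H; rewrite /Iseq (perm_uniq H) (perm_size H). Qed.

Lemma insert_cons N m (a : ptn) (X : rat) : (0 < m)%N -> (psize a <= N)%N ->
  \sum_(a' <- allp N) (if perm_eq (m :: pval a') (pval a) then X else 0) =
  if m \in pval a then X else 0.
Proof.
move=> m0 aN; case: ifP => ma.
  have pa := perm_to_rem ma.
  rewrite (eq_bigr (fun a' : ptn => if perm_eq (rem m a) a' then X else 0)); last first.
    move=> a' _; rewrite (permPr pa) perm_cons perm_sym //.
  apply: (@delta_F N (rem m a) (fun _ => X)) => //.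
    by have := part_pos a; rewrite (perm_all _ pa) /= => /andP[].
  by move=> _; move: aN; rewrite /psize (perm_sumn pa) /=; lia.
rewrite big1 // => a' _; case: ifP => // /perm_mem H.
by move: (H m); rewrite inE eqxx ma.
Qed.

Lemma perm_nil_eq (s : seq nat) : perm_eq [::] s = (s == [::]).
Proof. by rewrite perm_sym; apply/perm_nilP/eqP. Qed.

Lemma uZinvZ (l : ptn) : umul uZinv uZ l = uone l.
Proof.
rewrite (umulE _ _ (leqnn (psize l))) /um.
set N := psize l.
have lN : (sumn l <= N)%N by [].
rewrite /uone; case El: (pval l) lN => [|m l'] lN /=.
  rewrite (eq_bigr (fun a : ptn => if perm_eq [::] a then
      \sum_(b <- allp N) (if perm_eq [::] b then Iseq a else 0) else 0)); last first.
    move=> a _; rewrite perm_nil_eq; case: eqP => Ea.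
      apply: eq_bigr => b _; have -> : uZinv a * uZ b = Iseq a by rewrite /uZ mulr1.
      by rewrite Ea /= perm_sym.
    rewrite big1 // => b _; case: ifP => // /perm_size; rewrite size_cat /=.
    by case: (pval a) Ea => //= x s _; rewrite addSn.
  rewrite (@delta_F N [::] (fun s =>
      \sum_(b <- allp N) (if perm_eq [::] b then Iseq s else 0))) //=; last first.
    by move=> u v uv; rewrite (Iseq_perm uv).
  by rewrite (@delta_F N [::] (fun s => 1)).
have m0 : (0 < m)%N by have := part_pos l; rewrite El /= => /andP[].
have ml : forall a b : ptn, perm_eq (pval a ++ pval b) (m :: l') -> (psize a <= N)%N /\ (psize b <= N)%N.
  move=> a b /perm_sumn; rewrite sumn_cat /psize => H; move: lN; rewrite -H; lia.
rewrite (eq_bigr (fun a : ptn => \sum_(b <- allp N)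
     ((if m \in pval a then (if perm_eq (pval a ++ pval b) (m :: l') then Iseq a else 0) else 0) +
      (if m \in pval a then 0 else (if perm_eq (pval a ++ pval b) (m :: l') then Iseq a else 0))))); last first.
  move=> a _; apply: eq_bigr => b _; rewrite /uZ mulr1.
  by case: ifP; case: ifP; rewrite ?addr0 ?add0r.
rewrite (eq_bigr _ (fun a _ => big_split _ _ _ _ _)) big_split /=.
set S1 := (X in X + _ = _); set S2 := (X in _ + X = _).
have E1 : S1 = - \sum_(a <- allp N) \sum_(b <- allp N)
     (if perm_eq (pval a ++ pval b) l' then (if m \in pval a then 0 else Iseq a) else 0).
  rewrite /S1.
  transitivity (\sum_(a <- allp N) \sum_(b <- allp N) \sum_(a' <- allp N)
     (if perm_eq (m :: pval a') (pval a) then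
        (if perm_eq (pval a ++ pval b) (m :: l') then Iseq a else 0) else 0)).
    rewrite big_seq [RHS]big_seq; apply: eq_bigr => a.
    rewrite mem_allp => aN; apply: eq_bigr => b _; rewrite insert_cons //.
  transitivity (\sum_(a' <- allp N) \sum_(b <- allp N) \sum_(a <- allp N)
     (if perm_eq (m :: pval a') (pval a) then
        (if perm_eq (pval a ++ pval b) (m :: l') then Iseq a else 0) else 0)).
    rewrite (eq_bigr _ (fun a _ => exchange_big _ _ _ _ _ _)) /= exchange_big.
    by apply: eq_bigr => a' _; rewrite exchange_big.
  rewrite -sumrN; apply: eq_bigr => a' _; rewrite -sumrN; apply: eq_bigr => b _.
  rewrite (@delta_F N (m :: pval a') (fun d => 
      (if perm_eq (d ++ pval b) (m :: l') then Iseq d else 0))) //.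
  - rewrite /= perm_cons; case: ifP; rewrite ?oppr0 // => _.
    rewrite /Iseq /=; case: (m \in pval a') => /=; rewrite ?oppr0 //.
    by case: ifP; rewrite ?oppr0 // exprS mulN1r.
  - by rewrite /= m0 part_pos.
  - by move=> u v uv; rewrite (perm_catr _ uv) (Iseq_perm uv).
  - case: ifP => // /perm_sumn; rewrite sumn_cat /= => H _.
    by move: lN => /=; lia.
have E2 : S2 = \sum_(a <- allp N) \sum_(b <- allp N)
     (if perm_eq (pval a ++ pval b) l' then (if m \in pval a then 0 else Iseq a) else 0).
  rewrite /S2.
  transitivity (\sum_(a <- allp N) \sum_(b <- allp N) \sum_(b' <- allp N)
     (if perm_eq (m :: pval b') (pval b) then
        (if m \in pval a then 0 else (if perm_eq (pval a ++ pval b) (m :: l') then Iseq a else 0)) else 0)).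
    apply: eq_bigr => a _; rewrite big_seq [RHS]big_seq; apply: eq_bigr => b.
    rewrite mem_allp => bN; rewrite insert_cons //.
    case mb: (m \in pval b); case ma: (m \in pval a) => //; case: ifP => // H.
    by have := perm_mem H m; rewrite mem_cat ma mb inE eqxx.
  apply: eq_bigr => a _; rewrite exchange_big; apply: eq_bigr => b' _.
  rewrite (@delta_F N (m :: pval b') (fun d => 
      (if m \in pval a then 0 else (if perm_eq (pval a ++ d) (m :: l') then Iseq a else 0)))) //.
  - have P := perm_catCA (pval a) [:: m] (pval b'); move: P => /= P.
    by rewrite P perm_cons; case: ifP; case: ifP.
  - by rewrite /= m0 part_pos.
  - by move=> u v uv; rewrite (perm_catl _ uv).
  - case: ifP => // _; case: ifP => // /perm_sumn; rewrite sumn_cat /= => H _.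
    by move: lN => /=; lia.
by rewrite E1 E2 addNr.
Qed.

Lemma qsum_mul A B n : qsum (umul A B) n = qmul (qsum A) (qsum B) n.
Proof.
rewrite /qsum /qmul big_seq.
rewrite (eq_bigr (fun l => um n A B l)); last first.
  by move=> l; rewrite mem_parts_of => /eqP Hl; apply: umulE; rewrite Hl.
rewrite -big_seq /um exchange_big.
transitivity (\sum_(a <- allp n) \sum_(b <- allp n)
   (if (psize a + psize b == n)%N then A a * B b else 0)).
  apply: eq_bigr => a _; rewrite exchange_big; apply: eq_bigr => b _.
  rewrite (@delta_sum _ _ (fun _ => A a * B b)) ?uniq_parts_of ?pos_cat //.
  by rewrite mem_parts_of psize_sortp ?pos_cat // sumn_cat.
rewrite (eq_bigr (fun i : 'I_n.+1 => \sum_(a <- parts_of i) \sum_(b <- parts_of (n - i))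
     A a * B b)); last first.
  by move=> i _; rewrite mulr_suml; apply: eq_bigr => a _; rewrite mulr_sumr.
rewrite (@sum_ord_parts _ (fun i a => \sum_(b <- parts_of (n - i)) A a * B b)).
rewrite big_seq [RHS]big_seq; apply: eq_bigr => a; rewrite mem_allp => an.
rewrite (sum_parts_allp _ (N := n)) ?leq_subr //; apply: eq_bigr => b _.
by case: eqP; case: eqP => //; lia.
Qed.

Lemma qsum_one n : qsum uone n = (n == 0)%N%:R.
Proof.
rewrite /qsum (eq_bigr (fun l : ptn => if perm_eq [::] l then (fun _ => 1) l else 0)); last first.
  by move=> l _; rewrite uoneE.
rewrite (@delta_sum _ _ (fun _ => 1)) ?uniq_parts_of // mem_parts_of psize_sortp //=.
by rewrite eq_sym; case: eqP.
Qed.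

Lemma qsum_E A n : qD (qsum A) n = qsum (uE A) n.
Proof.
rewrite /qD /qsum /uE mulr_sumr big_seq [RHS]big_seq; apply: eq_bigr => l.
by rewrite mem_parts_of => /eqP ->.
Qed.

Lemma size_qinv_seq a n : size (qinv_seq a n) = n.+1.
Proof. by elim: n => //= n IH; rewrite size_rcons IH. Qed.

Lemma nth_qinv_seq a n i : (i <= n)%N -> nth 0 (qinv_seq a n) i = qinv a i.
Proof.
elim: n i => [|n IH] i.
  by rewrite leqn0 => /eqP ->.
rewrite leq_eqVlt => /orP[/eqP ->//|]; rewrite ltnS => iN.
by rewrite /= nth_rcons size_qinv_seq ltnS iN IH.
Qed.

Lemma qinv_rec a n : qinv a n.+1 =
  - (a 0%N)^-1 * \sum_(1 <= k < n.+2) a k * qinv a (n.+1 - k)%N.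
Proof.
rewrite /qinv /= nth_rcons size_qinv_seq ltnn eqxx; congr (_ * _).
rewrite big_seq_cond [RHS]big_seq_cond; apply: eq_bigr => k.
rewrite mem_index_iota andbT => /andP[k1 k2].
by rewrite nth_qinv_seq //; lia.
Qed.

Lemma qinv_unique a c : a 0%N != 0 ->
  (forall n, qmul a c n = (n == 0)%N%:R) -> forall n, qinv a n = c n.
Proof.
move=> a0 H n; elim: n {-2}n (leqnn n) => [|n IH] k.
  rewrite leqn0 => /eqP ->; have := H 0%N; rewrite /qmul big_ord_recl big_ord0 addr0 /=.
  rewrite /qinv /= => E; apply: (mulfI a0); rewrite mulfV // E.
rewrite leq_eqVlt => /orP[/eqP ->|]; last by rewrite ltnS; apply: IH.
rewrite qinv_rec.
have := H n.+1; rewrite /qmul -(big_mkord xpredT (fun i => a i * c (n.+1 - i)%N)).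
rewrite (big_ltn (m := 0%N)) //= subn0 => E.
have -> : \sum_(1 <= k0 < n.+2) a k0 * qinv a (n.+1 - k0)%N =
          \sum_(1 <= k0 < n.+2) a k0 * c (n.+1 - k0)%N.
  rewrite big_seq_cond [RHS]big_seq_cond; apply: eq_bigr => j.
  rewrite mem_index_iota andbT => /andP[j1 j2].
  by rewrite IH //; lia.
have -> : \sum_(1 <= k0 < n.+2) a k0 * c (n.+1 - k0)%N = - (a 0%N * c n.+1).
  by apply/eqP; rewrite -addr_eq0 addrC E.
by rewrite mulrN mulNr opprK mulrA mulVf // mul1r.
Qed.

Definition us := ptn -> rat.
HB.instance Definition _ := Choice.on us.

Definition us0 : us := fun _ => 0.
Definition usadd (x y : us) : us := fun l => x l + y l.
Definition usopp (x : us) : us := fun l => - x l.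

Lemma usaddA : associative usadd.
Proof. by move=> x y z; apply: funext => l; rewrite /usadd addrA. Qed.
Lemma usaddC : commutative usadd.
Proof. by move=> x y; apply: funext => l; rewrite /usadd addrC. Qed.
Lemma usadd0 : left_id us0 usadd.
Proof. by move=> x; apply: funext => l; rewrite /usadd /us0 add0r. Qed.
Lemma usaddN : left_inverse us0 usopp usadd.
Proof. by move=> x; apply: funext => l; rewrite /usadd /usopp /us0 addNr. Qed.

HB.instance Definition _ := GRing.isZmodule.Build us usaddA usaddC usadd0 usaddN.

Definition usmul (x y : us) : us := umul x y.
Lemma usmulA : associative usmul.
Proof. by move=> x y z; apply: funext => l; rewrite /usmul umulA. Qed.
Lemma usmulC : commutative usmul.
Proof. by move=> x y; apply: funext => l; rewrite /usmul umulC. Qed.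
Lemma usmul1 : left_id (uone : us) usmul.
Proof. by move=> x; apply: funext => l; rewrite /usmul umul1. Qed.
Lemma usmulD : left_distributive usmul (+%R : us -> us -> us).
Proof. by move=> x y z; apply: funext => l; rewrite /usmul umulDl. Qed.
Lemma usone0 : (uone : us) != 0.
Proof.
apply/eqP => /(congr1 (fun h : us => h (sortp [::]))).
by rewrite /uone /=; move/eqP; rewrite oner_eq0.
Qed.

HB.instance Definition _ := GRing.Zmodule_isComNzRing.Build us usmulA usmulC usmul1 usmulD usone0.

Lemma usmulE (x y : us) : x * y = umul x y.
Proof. by []. Qed.
Lemma usaddE (x y : us) l : (x + y) l = x l + y l.
Proof. by []. Qed.


Lemma usoppE (x : us) l : (- x) l = - x l.
Proof. by []. Qed.
Lemma us0E l : (0 : us) l = 0.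
Proof. by []. Qed.
Lemma us1E l : (1 : us) l = uone l.
Proof. by []. Qed.
Lemma ussubE (x y : us) l : (x - y) l = x l - y l.
Proof. by []. Qed.

Definition C (c : rat) : us := fun l => c * uone l.

Lemma CmulE c (h : us) : C c * h = (fun l => c * h l).
Proof. by apply: funext => l; rewrite usmulE /C umulZl umul1. Qed.

Definition E (x : us) : us := uE x.

Lemma uED (x y : us) : E (x + y) = E x + E y.
Proof. by apply: funext => l; rewrite /E /uE !usaddE /= mulrDr. Qed.
Lemma uEN (x : us) : E (- x) = - E x.
Proof. apply: funext => l; rewrite /E /uE !usoppE. exact: mulrN. Qed.
Lemma uEB (x y : us) : E (x - y) = E x - E y.
Proof. by rewrite uED uEN. Qed.
Lemma uEC c : E (C c) = 0.
Proof.
apply: funext => l; rewrite /E /uE /C /uone /psize /=.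
by case: (pval l) => [|x s] /=; rewrite us0E ?mul0r ?mulr0.
Qed.
Lemma uEM (x y : us) : E (x * y) = E x * y + x * E y.
Proof. by apply: funext => l; rewrite /E uE_mul. Qed.

Definition Iu : us := uZinv.
Definition Zu : us := uZ.

Lemma IZ : Iu * Zu = 1.
Proof. by apply: funext => l; rewrite usmulE uZinvZ. Qed.

Lemma uEI : E Iu = - (Iu * Iu * E Zu).
Proof.
have H : E (Iu * Zu) = 0.
  rewrite IZ; apply: funext => l; rewrite /E /uE /=.
  rewrite us1E us0E /uone /psize; case: (pval l) => [|x s] /=; rewrite ?mul0r ?mulr0 //.
rewrite uEM in H.
have -> : E Iu = E Iu * (Iu * Zu) by rewrite IZ mulr1.
apply/eqP; rewrite -subr_eq0 opprK; apply/eqP.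
have -> : E Iu * (Iu * Zu) + Iu * Iu * E Zu =
   Iu * (E Iu * Zu + Iu * E Zu) by ring.
by rewrite H mulr0.
Qed.

Definition c24 : rat := - (24%:R)^-1.

Lemma S2E : (S2 : us) = C c24 * Zu + E Zu.
Proof. by rewrite CmulE; apply: funext => l; rewrite usaddE /S2 /E /uE /Zu /uZ !mulr1. Qed.

Lemma DopE (h : us) : (Dop h : us) =
  C c24 * h + E h - (C c24 * Zu + E Zu) * Iu * (h * Iu) * Zu.
Proof.
rewrite -S2E; apply: funext => l; rewrite ussubE usaddE CmulE /Dop /S2 /E /uE -/c24.
by rewrite mulrDl.
Qed.

Lemma odotE (f g : us) : (odot f g : us) = f * Iu * (g * Iu) * Zu.
Proof. by []. Qed.

Lemma part2 (f g : us) : (Dop (odot f g) : us) = (odot (Dop f) g : us) + (odot f (Dop g) : us).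
Proof.
rewrite !odotE !DopE !(uEB, uED, uEM, uEI).
set k := C c24.
apply/eqP; rewrite -subr_eq0; apply/eqP.
set R := (k * (f * Iu) * (g * Iu) * Zu * (Iu * Zu + 1) + (f * Iu) * (g * Iu) * E Zu * (Iu * Zu - 1)).
transitivity ((Iu * Zu - 1) * R); first by rewrite /R; ring.
by rewrite IZ subrr mul0r.
Qed.

Lemma part3u (f : us) : E (f * Iu) = (Dop f : us) * Iu.
Proof.
rewrite !DopE !(uEB, uED, uEM, uEI).
set k := C c24.
apply/eqP; rewrite -subr_eq0; apply/eqP.
set R : us := (k * f * Iu * (Iu * Zu + 1) + f * Iu * Iu * E Zu).
transitivity ((Iu * Zu - 1) * R); first by rewrite /R; ring.
by rewrite IZ subrr mul0r.
Qed.

Lemma part1u (a b : rat) (f g : us) :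
  (Dop (fun l => a * f l + b * g l) : us) = C a * Dop f + C b * Dop g.
Proof.
have -> : (fun l => a * f l + b * g l) = C a * f + C b * g by rewrite !CmulE.
rewrite !DopE !(uEB, uED, uEM, uEC).
ring.
Qed.

Lemma qsumZI n : qmul (qsum uZ) (qsum uZinv) n = (n == 0)%N%:R.
Proof.
rewrite -qsum_mul -qsum_one /qsum; apply: eq_bigr => l _.
by rewrite umulC uZinvZ.
Qed.

Lemma qinvZ n : qinv (qsum (fun _ => 1)) n = qsum uZinv n.
Proof.
apply: qinv_unique; last exact: qsumZI.
apply/eqP => H0; have := qsumZI 0; rewrite /qmul big_ord_recl big_ord0 /=.
by rewrite /uZ H0 mul0r addr0 => /eqP; rewrite eq_sym oner_eq0.
Qed.

Lemma qbracketE (h : ptn -> rat) n : qbracket h n = qsum (umul h uZinv) n.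
Proof.
rewrite qsum_mul /qbracket /qdiv /qmul; apply: eq_bigr => i _.
by rewrite qinvZ.
Qed.

Theorem proposition5p1p1 :
  (forall (a b : rat) (f g : ptn -> rat),
      Dop (fun l => a * f l + b * g l) =1 (fun l => a * Dop f l + b * Dop g l)) /\
  (forall f g : ptn -> rat,
      Dop (odot f g) =1 (fun l => odot (Dop f) g l + odot f (Dop g) l)) /\
  (forall f : ptn -> rat, qD (qbracket f) =1 qbracket (Dop f)).
Proof.
split; [|split].
- move=> a b f g l; rewrite (part1u a b f g) usaddE !CmulE //.
- by move=> f g l; rewrite (part2 f g).
- move=> f n; rewrite /qD qbracketE.
  have -> : (n%:R * qsum (umul f uZinv) n) = qD (qsum (umul f uZinv)) n by [].
  rewrite qsum_E qbracketE.
  have -> : uE (umul f uZinv) = E ((f : us) * Iu) by [].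
  by rewrite part3u.
Qed.
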